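(* Let $(S,d)$ be a metric space and let $P\subset S$ be a subset with at least two points, equipped with the restriction of $d$. Then $\mathcal{E}^S_P$ maps $\operatorname{ext}_*(B^P_{\mathrm{BL}})$ into $\operatorname{ext}_*(B^S_{\mathrm{BL}})$.
   Context: For a metric space $T$, $\mathrm{BL}(T)$ is the space of bounded real-valued Lipschitz functions on $T$, $|f|_L=\sup_{x\neq y}|f(x)-f(y)|/d(x,y)$, $\|f\|_{\mathrm{BL}}=\|f\|_\infty+|f|_L$, $B^T_{\mathrm{BL}}=\{f\in\mathrm{BL}(T):\|f\|_{\mathrm{BL}}\le1\}$, and $\operatorname{ext}_*(B^T_{\mathrm{BL}})=\operatorname{ext}(B^T_{\mathrm{BL}})\setminus\{f\in B^T_{\mathrm{BL}}:|f|=\mathbf{1}\}$ (non-trivial extreme points). For $f\in\mathrm{BL}(P)$: $\mathcal{E}^{S,0}_P f(x)=\sup_{p\in P}[f(p)-|f|_L d(p,x)]$ for $x\in S$, and $\mathcal{E}^S_P f=\max(\mathcal{E}^{S,0}_P f,-\|f\|_\infty)$. *)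

(* Defs.v *)
From mathcomp Require Import all_boot all_order all_algebra.
From mathcomp Require Import all_classical all_reals.
Set Implicit Arguments. Unset Strict Implicit. Unset Printing Implicit Defensive.
Import Order.TTheory GRing.Theory Num.Theory.
Local Open Scope classical_set_scope.
Local Open Scope ring_scope.

Section BL.
Variable R : realType.

Definition is_metric (T : Type) (d : T -> T -> R) : Prop :=
  (forall x y, 0 <= d x y) /\
  (forall x y, d x y = 0 <-> x = y) /\
  (forall x y, d x y = d y x) /\
  (forall x y z, d x z <= d x y + d y z).

Definition is_BL (T : Type) (d : T -> T -> R) (f : T -> R) : Prop :=
  (exists M : R, forall x, `|f x| <= M) /\
  (exists L : R, forall x y, `|f x - f y| <= L * d x y).

Definition lipc (T : Type) (d : T -> T -> R) (f : T -> R) : R :=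
  sup [set r | exists x y, x <> y /\ r = `|f x - f y| / d x y].

Definition supnorm (T : Type) (f : T -> R) : R :=
  sup [set r | exists x, r = `|f x|].

Definition BLnorm (T : Type) (d : T -> T -> R) (f : T -> R) : R :=
  supnorm f + lipc d f.

Definition BLball (T : Type) (d : T -> T -> R) (f : T -> R) : Prop :=
  is_BL d f /\ BLnorm d f <= 1.

Definition is_ext_BL (T : Type) (d : T -> T -> R) (f : T -> R) : Prop :=
  BLball d f /\
  forall (g h : T -> R) (t : R), BLball d g -> BLball d h -> 0 < t < 1 ->
    (forall x, f x = t * g x + (1 - t) * h x) ->
    (forall x, g x = f x) /\ (forall x, h x = f x).

Definition is_ext_star_BL (T : Type) (d : T -> T -> R) (f : T -> R) : Prop :=
  is_ext_BL d f /\ ~ (forall x, `|f x| = 1).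

Definition restr_metric (S : Type) (d : S -> S -> R) (P : set S)
  : {x : S | P x} -> {x : S | P x} -> R :=
  fun p q => d (proj1_sig p) (proj1_sig q).
Arguments restr_metric {S} d P _ _.

Definition ext0 (S : Type) (d : S -> S -> R) (P : set S)
  (f : {x : S | P x} -> R) (x : S) : R :=
  sup [set r | exists p : {x : S | P x},
                 r = f p - lipc (restr_metric d P) f * d (proj1_sig p) x].
Arguments ext0 {S} d P f x.

Definition ext_op (S : Type) (d : S -> S -> R) (P : set S)
  (f : {x : S | P x} -> R) (x : S) : R :=
  Num.max (ext0 d P f x) (- supnorm f).

End BL.
Arguments restr_metric {R S} d P _ _.
Arguments ext0 {R S} d P f x.
Arguments ext_op {R S} d P f x.

(* Main.v *)
Require Import Defs.
From mathcomp Require Import all_boot all_order all_algebra.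
From mathcomp Require Import all_classical all_reals.
From mathcomp Require Import ring lra.
Set Implicit Arguments. Unset Strict Implicit. Unset Printing Implicit Defensive.
Import Order.TTheory GRing.Theory Num.Theory.
Local Open Scope classical_set_scope.
Local Open Scope ring_scope.

Section Gen.
Variables (R : realType) (T : Type) (d : T -> T -> R).
Hypothesis d0 : forall x y, 0 <= d x y.
Hypothesis dxx : forall x, d x x = 0.

Lemma lipc_ge (f : T -> R) : is_BL d f -> forall x y, `|f x - f y| <= lipc d f * d x y.
Proof.
move=> [_ [L HL]] x y.
have [dz|dp] := eqVneq (d x y) 0.
  by have := HL x y; rewrite dz !mulr0.
have dpos : 0 < d x y by rewrite lt0r dp d0.
have xy : x <> y by move=> e; move: dp; rewrite e dxx eqxx.
rewrite -ler_pdivrMr //.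
apply: ub_le_sup; last by exists x, y.
exists L => r [a [b [ab ->]]].
have [dz|dp'] := eqVneq (d a b) 0.
  have := HL a b; rewrite dz mulr0 invr0 mulr0 => h.
  have := HL x y; have := normr_ge0 (f x - f y) => h1 h2.
  have : 0 <= L * d x y by apply: le_trans h2.
  by rewrite pmulr_lge0.
by rewrite ler_pdivrMr ?lt0r ?dp' ?d0.
Qed.

Lemma lipc_le (f : T -> R) K : 0 <= K -> (exists x y : T, x <> y) ->
  (forall x y, `|f x - f y| <= K * d x y) -> lipc d f <= K.
Proof.
move=> K0 [x0 [y0 xy0]] H; apply: ge_sup; first by exists (`|f x0 - f y0| / d x0 y0), x0, y0.
move=> r [a [b [ab ->]]].
have [dz|dp'] := eqVneq (d a b) 0.
  by rewrite dz invr0 mulr0.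
by rewrite ler_pdivrMr ?lt0r ?dp' ?d0.
Qed.


Lemma lipc_ge0 (f : T -> R) x y : is_BL d f -> 0 < d x y -> 0 <= lipc d f.
Proof.
move=> hf dp; have := lipc_ge hf x y.
have := normr_ge0 (f x - f y) => h1 h2.
have : 0 <= lipc d f * d x y by apply: le_trans h2.
by rewrite pmulr_lge0.
Qed.

Lemma supnorm_ge (f : T -> R) : (exists M, forall x, `|f x| <= M) -> forall x, `|f x| <= supnorm f.
Proof.
move=> [M HM] x; apply: ub_le_sup; last by exists x.
by exists M => r [y ->].
Qed.

Lemma supnorm_le (f : T -> R) K (x0 : T) : (forall x, `|f x| <= K) -> supnorm f <= K.
Proof.
move=> H; apply: ge_sup; first by exists `|f x0|, x0.
by move=> r [y ->].
Qed.

Lemma lipc_addc (f : T -> R) c : lipc d (fun x => f x + c) = lipc d f.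
Proof.
rewrite /lipc; congr sup; apply: funext => r; apply: propext; split;
  move=> [a [b [ab ->]]]; exists a, b; split => //; congr (`|_| / _); ring.
Qed.

End Gen.
Section Main.
Variables (R : realType) (S : Type) (d : S -> S -> R) (P : set S).
Hypothesis hd : is_metric d.
Hypothesis two : exists p q : S, P p /\ P q /\ p <> q.
Variable f : {x | P x} -> R.
Hypothesis fBL : is_BL (restr_metric d P) f.
Local Notation L := (lipc (restr_metric d P) f).
Local Notation m := (supnorm f).
Local Notation E0 := (ext0 d P f).
Local Notation F := (ext_op d P f).

Lemma d0 x y : 0 <= d x y. Proof. by case: hd. Qed.
Lemma dxx x : d x x = 0. Proof. by case: hd => _ [h _]; apply/h. Qed.
Lemma dsym x y : d x y = d y x. Proof. by case: hd => _ [_ [h _]]. Qed.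
Lemma dtri x y z : d x z <= d x y + d y z. Proof. by case: hd => _ [_ [_ h]]. Qed.
Lemma dpos x y : x <> y -> 0 < d x y.
Proof. move=> xy; rewrite lt0r d0 andbT; apply/eqP => h; apply: xy; case: hd => _ [h1 _]; exact/h1. Qed.
Lemma dP0 x y : 0 <= restr_metric d P x y. Proof. exact: d0. Qed.
Lemma dPxx x : restr_metric d P x x = 0. Proof. exact: dxx. Qed.

Lemma twoP : exists (p q : {x | P x}), p <> q /\ 0 < restr_metric d P p q.
Proof.
case: two => p [q [Pp [Pq pq]]]; exists (exist P p Pp), (exist P q Pq); split.
  by move=> [].
exact: dpos.
Qed.

Lemma twoS : exists (p q : S), p <> q. Proof. by case: two => p [q [_ [_ ?]]]; exists p, q. Qed.

Lemma p0 : {x | P x}.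
Proof. have h : exists x, P x by case: two => p [q [Pp _]]; exists p.
exact: (boolp.constructive_indefinite_description h). Qed.

Lemma L0 : 0 <= L.
Proof. case: twoP => p [q [_ h]]; exact: (lipc_ge0 dP0 dPxx fBL h). Qed.

Lemma f_bd p : `|f p| <= m.
Proof. by apply: supnorm_ge; case: fBL. Qed.

Lemma m0 : 0 <= m.
Proof. exact: le_trans (normr_ge0 _) (f_bd p0). Qed.

Lemma f_lip p q : `|f p - f q| <= L * d (proj1_sig p) (proj1_sig q).
Proof. exact: (lipc_ge dP0 dPxx fBL). Qed.

Lemma E0_ge x p : f p - L * d (proj1_sig p) x <= E0 x.
Proof.
apply: ub_le_sup; last by exists p.
exists m => r [q ->].
have := f_bd q; have := L0; have := d0 (proj1_sig q) x.
move=> h1 h2 h3; have := mulr_ge0 h2 h1; have := ler_norm (f q); lra.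
Qed.

Lemma E0_le x K : (forall p, f p - L * d (proj1_sig p) x <= K) -> E0 x <= K.
Proof. move=> H; apply: ge_sup; first by exists (f p0 - L * d (proj1_sig p0) x), p0.
by move=> r [q ->]. Qed.

Lemma E0_ub x : E0 x <= m.
Proof.
apply: E0_le => q; have := f_bd q; have := L0; have := d0 (proj1_sig q) x.
move=> h1 h2 h3; have := mulr_ge0 h2 h1; have := ler_norm (f q); lra.
Qed.

Lemma E0_lip x y : E0 x <= E0 y + L * d x y.
Proof.
apply: E0_le => q.
have := E0_ge y q; have := dtri (proj1_sig q) x y.
have := dtri (proj1_sig q) y x; rewrite (dsym y x) => h1 h2 h3.
have := ler_wpM2l L0 h2; lra.
Qed.

Lemma E0_P p : E0 (proj1_sig p) = f p.
Proof.
apply/eqP; rewrite eq_le; apply/andP; split.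
  apply: E0_le => q; have := f_lip q p; rewrite ler_norml => /andP[_ h]; lra.
by have := E0_ge (proj1_sig p) p; rewrite dxx mulr0 subr0.
Qed.

Lemma F_P p : F (proj1_sig p) = f p.
Proof.
rewrite /ext_op E0_P; apply/max_idPl.
by have := f_bd p; rewrite ler_norml => /andP[].
Qed.

Lemma F_bd x : `|F x| <= m.
Proof.
rewrite /ext_op ler_norml; apply/andP; split.
  by rewrite le_max lexx orbT.
by rewrite ge_max E0_ub /= lerNl; have := m0; lra.
Qed.

Lemma max_lip (a b c K : R) : a <= b + K -> b <= a + K -> 0 <= K ->
  `|Num.max a c - Num.max b c| <= K.
Proof.
move=> h1 h2 h3; rewrite ler_norml.
case: (leP a c); case: (leP b c) => h4 h5; lra.
Qed.

Lemma F_lip x y : `|F x - F y| <= L * d x y.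
Proof.
apply: max_lip; first exact: E0_lip.
  by rewrite dsym; exact: E0_lip.
exact: mulr_ge0 L0 (d0 _ _).
Qed.

Lemma F_min (G : S -> R) : (forall x, - m <= G x) ->
  (forall x y, G y - G x <= L * d y x) -> (forall p, G (proj1_sig p) = f p) ->
  forall x, F x <= G x.
Proof.
move=> h1 h2 h3 x; rewrite /ext_op ge_max h1 andbT.
by apply: E0_le => q; rewrite -h3; have := h2 x (proj1_sig q); lra.
Qed.


Lemma norm1 : is_ext_BL (restr_metric d P) f -> BLnorm (restr_metric d P) f = 1.
Proof.
move=> [[_ fn] fe]; apply/eqP; rewrite eq_le fn /=; rewrite leNgt; apply/negP => lt1.
set c := (1 - BLnorm (restr_metric d P) f) / 2.
have c0 : 0 < c by rewrite /c divr_gt0 // subr_gt0.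
have ball : forall c', `|c'| <= c -> BLball (restr_metric d P) (fun x => f x + c').
  move=> c' hc; case: fBL => [[M HM] [K HK]]; split; first split.
  - exists (M + c) => x; have := HM x; have := ler_normD (f x) c'; lra.
  - by exists K => x y; have -> : f x + c' - (f y + c') = f x - f y by ring.
  rewrite /BLnorm lipc_addc.
  have : supnorm (fun x => f x + c') <= m + c.
    apply: (@supnorm_le _ _ _ _ p0) => x; have := f_bd x; have := ler_normD (f x) c'; lra.
  move: lt1; rewrite /c /BLnorm; lra.
have b1 := ball c (ltac:(by rewrite ger0_norm // ltW)).
have b2 := ball (-c) (ltac:(by rewrite normrN ger0_norm // ltW)).
have t01 : 0 < (1/2 : R) < 1 by lra.
have e : forall x, f x = 1/2 * (f x + c) + (1 - 1/2) * (f x + - c) by move=> x; lra.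
have [h _] := fe _ _ _ b1 b2 t01 e.
by have := h p0; move: c0; lra.
Qed.


Lemma G_ge (G : S -> R) : BLball d G -> BLnorm (restr_metric d P) f = 1 ->
  (forall p, G (proj1_sig p) = f p) -> forall x, F x <= G x.
Proof.
move=> [GBL Gn] n1 hG.
have Gbd := supnorm_ge (proj1 GBL).
have Glip := lipc_ge d0 dxx GBL.
have sG : m <= supnorm G.
  apply: (@supnorm_le _ _ _ _ p0) => p; rewrite -hG; exact: Gbd.
have lG0 : 0 <= lipc d G.
  by case: twoS => p [q pq]; exact: (lipc_ge0 d0 dxx GBL (dpos pq)).
have lG : L <= lipc d G.
  apply: (lipc_le dP0 lG0); first by case: twoP => p [q [pq _]]; exists p, q.
  by move=> p q; rewrite -!hG; exact: Glip.
move: Gn n1; rewrite /BLnorm => Gn n1.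
have lGL : lipc d G <= L by lra.
have sGm : supnorm G <= m by lra.
apply: F_min => //.
- move=> x; have := Gbd x; rewrite ler_norml => /andP[h _]; lra.
- move=> x y; have := Glip y x; rewrite ler_norml => /andP[_ h].
  have := ler_wpM2r (d0 y x) lGL; lra.
Qed.

Lemma restr_ball (G : S -> R) : BLball d G ->
  BLball (restr_metric d P) (fun p => G (proj1_sig p)).
Proof.
move=> [GBL Gn]; have GBL' := GBL; case: GBL' => [[M HM] [K HK]].
have Gbd := supnorm_ge (proj1 GBL).
have Glip := lipc_ge d0 dxx GBL.
have lG0 : 0 <= lipc d G.
  by case: twoS => p [q pq]; exact: (lipc_ge0 d0 dxx GBL (dpos pq)).
split; first by split; [exists M => p; exact: HM | exists K => p q; exact: HK].
have h1 : supnorm (fun p : {x | P x} => G (proj1_sig p)) <= supnorm G.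
  by apply: (@supnorm_le _ _ _ _ p0) => p; exact: Gbd.
have h2 : lipc (restr_metric d P) (fun p : {x | P x} => G (proj1_sig p)) <= lipc d G.
  apply: (lipc_le dP0 lG0); first by case: twoP => p [q [pq _]]; exists p, q.
  by move=> p q; exact: Glip.
move: Gn; rewrite /BLnorm; lra.
Qed.

Lemma main : is_ext_star_BL (restr_metric d P) f -> is_ext_star_BL d F.
Proof.
move=> [fe fnt]; have n1 := norm1 fe; case: fe => _ fe.
split; last first.
  by move=> h; apply: fnt => p; rewrite -F_P.
have FBL : is_BL d F.
  by split; [exists m; exact: F_bd | exists L; exact: F_lip].
split.
  split => //; rewrite /BLnorm; move: n1; rewrite /BLnorm.
  have := @supnorm_le _ _ F m (proj1_sig p0) F_bd.
  have : lipc d F <= L.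
    apply: (lipc_le d0 L0 twoS); exact: F_lip.
  lra.
move=> G H t hG hH t01 e.
have hGP := restr_ball hG.
have hHP := restr_ball hH.
have [eG eH] := fe _ _ t hGP hHP t01 (fun p => ltac:(by rewrite -F_P e)).
have lG := G_ge hG n1 eG.
have lH := G_ge hH n1 eH.
move: t01 => /andP[t0 t1].
split => x; have := e x; have := lG x; have := lH x; move=> a b c; nra.
Qed.

End Main.

Theorem theorem4p8 (R : realType) (S : Type) (d : S -> S -> R)
  (hd : is_metric d) (P : set S)
  (hP : exists p q : S, P p /\ P q /\ p <> q)
  (f : {x : S | P x} -> R) :
  is_ext_star_BL (restr_metric d P) f ->
  is_ext_star_BL d (ext_op d P f).
Proof.
move=> hf; have fBL : is_BL (restr_metric d P) f by case: hf => [[[]]].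
exact: (main hd hP fBL hf).
Qed.
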